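(* Suppose that Assumptions (A1) and (A2) hold. Then there is a constant $C>0$ depending only on $\alpha$, $\gamma$, the constants in (A1) and (A2), and $\|V\|_{L^\infty}$ (independent of $\epsilon\in(0,1]$) such that every solution $(u,m)$ of Problem 1 satisfies $\int_0^1 m\,dx\le C$.
   Context: Let $\mathbb{T}=\mathbb{R}/\mathbb{Z}$ be the one-dimensional torus; functions on $\mathbb{T}$ are identified with $1$-periodic functions on $\mathbb{R}$, and integrals over $\mathbb{T}$ are written $\int_0^1$. Let $H:\mathbb{R}\to\mathbb{R}$ be of class $C^2$, $V:\mathbb{T}\to\mathbb{R}$ continuous, $\alpha>0$, and $0<\epsilon\le 1$. We say $(u,m)$ solves Problem 1 if $u,m\in C^2(\mathbb{T})$, $m>0$ on $\mathbb{T}$, and on $\mathbb{T}$: $$u-u_{xx}+H(u_x)+V(x)=m^\alpha+\epsilon(m-m_{xx}),\qquad m-m_{xx}-(H'(u_x)m)_x=1-\epsilon(u-u_{xx}).$$ Assumptions: (A1) there exist constants $C_1,C_2,C_3>0$ and $\gamma>1$ such that $-C_1+C_2|p|^\gamma\le H(p)\le C_1+C_3|p|^\gamma$ for all $p\in\mathbb{R}$. (A2) There exist constants $\tilde C_1,\tilde C_2,\tilde C_3>0$ such that $-\tilde C_1+\tilde C_2|p|^\gamma\le pH'(p)-H(p)\le \tilde C_1+\tilde C_3|p|^\gamma$ for all $p$ (same $\gamma$ as in (A1)). *)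

(* Defs.v *)
From Stdlib Require Export Reals.
Open Scope R_scope.

Definition C2_with (f f' f'' : R -> R) : Prop :=
  (forall x, derivable_pt_lim f x (f' x)) /\
  (forall x, derivable_pt_lim f' x (f'' x)) /\
  continuity f''.

(* 1-periodic functions on R = functions on the torus T = R/Z. *)
Definition periodic1 (f : R -> R) : Prop := forall x, f (x + 1) = f x.

(* x^g for x >= 0 and g > 0, with the convention 0^g = 0
   (Stdlib's Rpower 0 g is 1, hence this wrapper). *)
Definition rpow (x g : R) : R := if Rle_dec x 0 then 0 else Rpower x g.

Definition is_sup_norm (V : R -> R) (Vb : R) : Prop :=
  is_lub (fun r => exists x, r = Rabs (V x)) Vb.

(* Main.v *)
Require Import Defs.
From Coquelicot Require Import Coquelicot.
From Stdlib Require Import Reals Lra Psatz.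
Open Scope R_scope.

Lemma cmul (f g : R -> R) x : continuous f x -> continuous g x -> continuous (fun y => f y * g y) x.
Proof. intros; apply (continuous_mult f g); auto. Qed.
Lemma cplus (f g : R -> R) x : continuous f x -> continuous g x -> continuous (fun y => f y + g y) x.
Proof. intros; apply (continuous_plus f g); auto. Qed.
Lemma cminus (f g : R -> R) x : continuous f x -> continuous g x -> continuous (fun y => f y - g y) x.
Proof. intros. apply (continuous_plus f (fun y => - g y)); auto. apply (continuous_opp g); auto. Qed.
Lemma cconst (c : R) (x : R) : continuous (fun _ : R => c) x.
Proof. apply continuous_const. Qed.

Lemma dmul (f g : R -> R) x a b : is_derive f x a -> is_derive g x b ->
  is_derive (fun y => f y * g y) x (a * g x + f x * b).
Proof. intros. apply (is_derive_mult f g); auto. intros; apply Rmult_comm. Qed.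
Lemma dplus (f g : R -> R) x a b : is_derive f x a -> is_derive g x b ->
  is_derive (fun y => f y + g y) x (a + b).
Proof. intros. apply (is_derive_plus f g); auto. Qed.
Lemma dminus (f g : R -> R) x a b : is_derive f x a -> is_derive g x b ->
  is_derive (fun y => f y - g y) x (a - b).
Proof. intros. apply (is_derive_minus f g); auto. Qed.
Lemma dscal (f : R -> R) c x a : is_derive f x a ->
  is_derive (fun y => c * f y) x (c * a).
Proof. intros. apply (is_derive_scal f); auto. Qed.

Lemma der_cont (f : R -> R) x l : derivable_pt_lim f x l -> continuous f x.
Proof. intros Hd. apply (ex_derive_continuous (K:=R_AbsRing) (V:=R_NormedModule)). exists l. now apply is_derive_Reals. Qed.

Lemma per_deriv (f f' : R -> R) : periodic1 f -> (forall x, derivable_pt_lim f x (f' x)) -> f' 1 = f' 0.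
Proof.
  intros P D.
  assert (H1 : is_derive (fun t => f (t + 1)) 0 (f' 1)).
  { assert (Hc := is_derive_comp f (fun t => t + 1) 0 (f' 1) 1).
    replace (f' 1) with (scal 1 (f' 1)) by (unfold scal; simpl; unfold mult; simpl; ring).
    apply Hc. replace (0+1) with 1 by ring. now apply is_derive_Reals.
    assert (Hp := dplus (fun t => t) (fun _ => 1) 0 1 0 (is_derive_id 0) (is_derive_const 1 0)). replace (1+0) with 1 in Hp by ring. exact Hp. }
  assert (H2 : is_derive f 0 (f' 1)).
  { eapply is_derive_ext; [|exact H1]. intros t; simpl. apply P. }
  apply is_derive_unique in H2. rewrite <- H2. apply is_derive_unique. now apply is_derive_Reals.
Qed.

Lemma per1 (f : R -> R) : periodic1 f -> f 1 = f 0.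
Proof. intros P. rewrite <- (P 0). f_equal; ring. Qed.

Lemma lin3 (f g h : R -> R) a b c : ex_RInt f 0 1 -> ex_RInt g 0 1 -> ex_RInt h 0 1 ->
  RInt (fun x => a * f x + b * g x + c * h x) 0 1 = a * RInt f 0 1 + b * RInt g 0 1 + c * RInt h 0 1.
Proof.
  intros Ef Eg Eh. apply is_RInt_unique.
  apply (is_RInt_plus (fun x => a * f x + b * g x) (fun x => c * h x)).
  apply (is_RInt_plus (fun x => a * f x) (fun x => b * g x)).
  apply (is_RInt_scal f). now apply (RInt_correct (V:=R_CompleteNormedModule)).
  apply (is_RInt_scal g). now apply (RInt_correct (V:=R_CompleteNormedModule)).
  apply (is_RInt_scal h). now apply (RInt_correct (V:=R_CompleteNormedModule)).
Qed.

Lemma rpow_ge0 x g : 0 <= rpow x g.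
Proof. unfold rpow. destruct (Rle_dec x 0). lra. unfold Rpower. left; apply exp_pos. Qed.

Ltac cont :=
  match goal with
  | |- continuous (fun y => ?H' (?u' y) * ?m y) ?x =>
      match goal with cA : forall _, continuous (fun y => H' (u' y) * m y) _ |- _ => exact (cA x) end
  | |- continuous (fun y => @?f y + @?g y) _ => apply (cplus f g); cont
  | |- continuous (fun y => @?f y - @?g y) _ => apply (cminus f g); cont
  | |- continuous (fun y => @?f y * @?g y) _ => apply (cmul f g); cont
  | |- continuous (fun _ => ?c) _ => apply cconst
  | |- continuous (fun y => ?f y) ?x =>
      match goal with cf : forall _, continuous f _ |- _ => exact (cf x) end
  | |- continuous ?f ?x =>
      match goal with cf : forall _, continuous f _ |- _ => exact (cf x) end
  end.

Theorem mainTheorem4 :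
  forall (alpha gamma C1 C2 C3 tC1 tC2 tC3 Vb : R),
    0 < alpha -> 1 < gamma ->
    0 < C1 -> 0 < C2 -> 0 < C3 -> 0 < tC1 -> 0 < tC2 -> 0 < tC3 ->
    0 <= Vb ->
  exists C : R, 0 < C /\
    forall (eps : R) (H H' H'' V u u' u'' m m' m'' : R -> R),
      0 < eps -> eps <= 1 ->
      (* H : R -> R of class C^2 *)
      C2_with H H' H'' ->
      (* (A1) *)
      (forall p, - C1 + C2 * rpow (Rabs p) gamma <= H p
                 /\ H p <= C1 + C3 * rpow (Rabs p) gamma) ->
      (* (A2) *)
      (forall p, - tC1 + tC2 * rpow (Rabs p) gamma <= p * H' p - H p
                 /\ p * H' p - H p <= tC1 + tC3 * rpow (Rabs p) gamma) ->
      (* V : T -> R continuous with ||V||_{L^infty} = Vb *)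
      continuity V -> periodic1 V -> is_sup_norm V Vb ->
      (* u, m in C^2(T), m > 0 *)
      C2_with u u' u'' -> periodic1 u ->
      C2_with m m' m'' -> periodic1 m ->
      (forall x, 0 < m x) ->
      (* Problem 1 *)
      (forall x, u x - u'' x + H (u' x) + V x
                 = rpow (m x) alpha + eps * (m x - m'' x)) ->
      (forall x, derivable_pt_lim (fun y => H' (u' y) * m y) x
                   (m x - m'' x - (1 - eps * (u x - u'' x)))) ->
      forall pr : Riemann_integrable m 0 1, RiemannInt pr <= C.
Proof.
  intros alpha gamma C1 C2 C3 tC1 tC2 tC3 Vb Ha Hg HC1 HC2 HC3 Ht1 Ht2 Ht3 HVb.
  exists (1 + tC1 + Vb). split; [lra|].
  intros eps H H' H'' V u u' u'' m m' m'' Ep Ep1 [HH1 [HH2 HH3]] A1 A2 Vc Vp Vs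
    [Hu1 [Hu2 Hu3]] up [Hm1 [Hm2 Hm3]] mp mpos E1 E2 pr.
  rewrite <- RInt_Reals.
  assert (cu : forall x, continuous u x) by (intro x; exact (der_cont _ _ _ (Hu1 x))).
  assert (cu' : forall x, continuous u' x) by (intro x; exact (der_cont _ _ _ (Hu2 x))).
  assert (cu'' : forall x, continuous u'' x) by (intro x; apply continuity_pt_filterlim; apply Hu3).
  assert (cm : forall x, continuous m x) by (intro x; exact (der_cont _ _ _ (Hm1 x))).
  assert (cm' : forall x, continuous m' x) by (intro x; exact (der_cont _ _ _ (Hm2 x))).
  assert (cm'' : forall x, continuous m'' x) by (intro x; apply continuity_pt_filterlim; apply Hm3).
  assert (cA : forall x, continuous (fun y => H' (u' y) * m y) x) by (intro x; exact (der_cont _ _ _ (E2 x))).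
  assert (Vbd : forall x, V x <= Vb).
  { intro x. destruct Vs as [Vs1 _]. assert (Rabs (V x) <= Vb) by (apply Vs1; exists x; reflexivity).
    pose proof (Rle_abs (V x)). lra. }
  pose (D := fun y => m y - m'' y - (1 - eps * (u y - u'' y))).
  pose (Phi := fun y => (((u y * (H' (u' y) * m y) - m y * u' y) + m' y * u y) + eps * (m y * m' y)) + eps * (u y * u' y)).
  pose (dPhi := fun y => ((((u' y * (H' (u' y) * m y) + u y * D y) - (m' y * u' y + m y * u'' y)) + (m'' y * u y + m' y * u' y)) + eps * (m' y * m' y + m y * m'' y)) + eps * (u' y * u' y + u y * u'' y)).
  assert (dP : forall x, is_derive Phi x (dPhi x)).
  { intro x. unfold Phi, dPhi, D; cbv beta.
    assert (d1 := fun x => proj2 (is_derive_Reals _ _ _) (Hu1 x)).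
    assert (d2 := fun x => proj2 (is_derive_Reals _ _ _) (Hu2 x)).
    assert (d3 := fun x => proj2 (is_derive_Reals _ _ _) (Hm1 x)).
    assert (d4 := fun x => proj2 (is_derive_Reals _ _ _) (Hm2 x)).
    assert (d5 := fun x => proj2 (is_derive_Reals _ _ _) (E2 x)).
    apply dplus. apply dplus. apply dplus. apply dminus.
    apply (dmul u (fun y => H' (u' y) * m y)); [apply d1|apply d5].
    apply (dmul m u'); [apply d3|apply d2].
    apply (dmul m' u); [apply d4|apply d1].
    apply (dscal (fun y => m y * m' y)); apply (dmul m m'); [apply d3|apply d4].
    apply (dscal (fun y => u y * u' y)); apply (dmul u u'); [apply d1|apply d2]. }
  assert (cdP : forall x, continuous dPhi x).
  { intro x. unfold dPhi, D.
    cont. }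
  assert (Iphi : RInt dPhi 0 1 = 0).
  { assert (F := is_RInt_derive Phi dPhi 0 1 (fun x _ => dP x) (fun x _ => cdP x)).
    rewrite (is_RInt_unique _ _ _ _ F). unfold minus, plus, opp; simpl. unfold Phi. rewrite (per1 u up), (per1 m mp), (per_deriv u u' up Hu1), (per_deriv m m' mp Hm1). ring. }
  pose (Psi := fun y => (H' (u' y) * m y + m' y) + eps * u' y).
  pose (dPsi := fun y => (D y + m'' y) + eps * u'' y).
  assert (dS : forall x, is_derive Psi x (dPsi x)).
  { intro x. unfold Psi, dPsi, D; cbv beta.
    assert (d2 := fun x => proj2 (is_derive_Reals _ _ _) (Hu2 x)).
    assert (d4 := fun x => proj2 (is_derive_Reals _ _ _) (Hm2 x)).
    assert (d5 := fun x => proj2 (is_derive_Reals _ _ _) (E2 x)).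
    apply dplus. apply dplus. apply d5. apply d4. apply (dscal u'); apply d2. }
  assert (cdS : forall x, continuous dPsi x).
  { intro x. unfold dPsi, D.
    cont. }
  assert (Ipsi : RInt dPsi 0 1 = 0).
  { assert (F := is_RInt_derive Psi dPsi 0 1 (fun x _ => dS x) (fun x _ => cdS x)).
    rewrite (is_RInt_unique _ _ _ _ F). unfold minus, plus, opp; simpl. unfold Psi. rewrite (per1 m mp), (per_deriv u u' up Hu1), (per_deriv m m' mp Hm1). ring. }
  assert (exu : ex_RInt u 0 1) by (apply (ex_RInt_continuous (V:=R_CompleteNormedModule)); intros; apply cu).
  assert (exm : ex_RInt m 0 1) by (apply (ex_RInt_continuous (V:=R_CompleteNormedModule)); intros; apply cm).
  assert (exuu : ex_RInt (fun y => u y * u y) 0 1) by (apply (ex_RInt_continuous (V:=R_CompleteNormedModule)); intros; apply cmul; apply cu).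
  assert (ex1 : ex_RInt (fun _ => 1) 0 1) by (apply (ex_RInt_continuous (V:=R_CompleteNormedModule)); intros; apply cconst).
  assert (I1 : RInt (fun _ => 1) 0 1 = 1).
  { rewrite RInt_const. unfold scal; simpl; unfold mult; simpl. ring. }
  set (M := RInt m 0 1). set (U := RInt u 0 1). set (S := RInt (fun y => u y * u y) 0 1).
  assert (F1 : 1 * M + eps * U + (-1) * 1 = 0).
  { assert (L := lin3 m u (fun _ => 1) 1 eps (-1) exm exu ex1).
    change (RInt m 0 1) with M in L. change (RInt u 0 1) with U in L. rewrite I1 in L.
    rewrite <- L. transitivity (RInt dPsi 0 1); [|exact Ipsi].
    apply RInt_ext. intros x _. unfold dPsi, D. match goal with |- ?a = ?b => change (@eq R a b) end. ring. }
  assert (F2 : (-(tC1+Vb)) * M + (-1) * U + eps * S <= 0).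
  { assert (L := lin3 m u (fun y => u y * u y) (-(tC1+Vb)) (-1) eps exm exu exuu).
    change (RInt m 0 1) with M in L. change (RInt u 0 1) with U in L.
    change (RInt (fun y => u y * u y) 0 1) with S in L.
    rewrite <- L. apply Rle_trans with (RInt dPhi 0 1); [|rewrite Iphi; apply Rle_refl].
    apply RInt_le. lra.
    apply (ex_RInt_continuous (V:=R_CompleteNormedModule)); intros; cont.
    apply (ex_RInt_continuous (V:=R_CompleteNormedModule)); intros; apply cdP.
    intros x _. unfold dPhi, D.
    pose proof (E1 x) as e1. destruct (A2 (u' x)) as [a2 _].
    pose proof (rpow_ge0 (Rabs (u' x)) gamma) as r1.
    pose proof (rpow_ge0 (m x) alpha) as r2.
    pose proof (Vbd x). pose proof (mpos x).
    match goal with |- ?a <= ?b => change (Rle a b) end.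
    set (p := u' x) in *. set (h := H p) in *. set (hp := H' p) in *. set (r := rpow (m x) alpha) in *.
    assert (t0 : 0 <= tC2 * rpow (Rabs p) gamma) by (apply Rmult_le_pos; lra).
    assert (t1 : 0 <= (p * hp - h + tC1) * m x) by (apply Rmult_le_pos; lra).
    assert (t2 : 0 <= m x * r) by (apply Rmult_le_pos; lra).
    assert (t3 : 0 <= eps * (m x * m x + m' x * m' x + p * p)).
    { apply Rmult_le_pos; [lra|]. pose proof (Rle_0_sqr (m x)); pose proof (Rle_0_sqr (m' x)); pose proof (Rle_0_sqr p); unfold Rsqr in *; lra. }
    assert (t4 : 0 <= (Vb - V x) * m x) by (apply Rmult_le_pos; lra).
    assert (t5 : m x * (u x - u'' x + h + V x - r - eps * (m x - m'' x)) = 0) by (rewrite e1; ring).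
    match goal with |- ?a <= ?b => assert (b - a = (p * hp - h + tC1) * m x + m x * r + eps * (m x * m x + m' x * m' x + p * p) + (Vb - V x) * m x + m x * (u x - u'' x + h + V x - r - eps * (m x - m'' x))) by ring end.
    lra. }
  assert (F3 : 0 <= 1 * S + (-2 * U) * U + (U * U) * 1).
  { assert (L := lin3 (fun y => u y * u y) u (fun _ => 1) 1 (-2*U) (U*U) exuu exu ex1).
    change (RInt u 0 1) with U in L.
    change (RInt (fun y => u y * u y) 0 1) with S in L. rewrite I1 in L.
    rewrite <- L.
    apply RInt_ge_0. lra.
    apply (ex_RInt_continuous (V:=R_CompleteNormedModule)); intros; cont.
    intros x _. match goal with |- ?a <= ?b => change (Rle a b) end.
    replace (1 * (u x * u x) + -2 * U * u x + U * U * 1) with ((u x - U) * (u x - U)) by ring. apply Rle_0_sqr. }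
  clearbody M U S.
  destruct (Rle_dec M 0) as [HM|HM]. lra.
  apply Rnot_le_lt in HM.
  set (K := tC1 + Vb).
  assert (eU : eps * U = 1 - M) by lra.
  assert (hS : U * U <= S) by lra.
  assert (h1 : eps * eps * (U * U) <= eps * eps * S).
  { apply Rmult_le_compat_l; [|exact hS]. apply Rmult_le_pos; lra. }
  assert (h2 : eps * (eps * S) <= eps * (K * M + U)).
  { apply Rmult_le_compat_l; unfold K; lra. }
  assert (h3 : (1 - M) * (1 - M) <= eps * K * M + (1 - M)).
  { rewrite <- eU. replace (eps * U * (eps * U)) with (eps * eps * (U * U)) by ring.
    replace (eps * K * M + eps * U) with (eps * (K * M + U)) by ring.
    replace (eps * (eps * S)) with (eps * eps * S) in h2 by ring. lra. }
  assert (h4 : 0 <= (1 - eps) * K * M).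
  { apply Rmult_le_pos; [apply Rmult_le_pos|]; unfold K; lra. }
  assert (h5 : M * (M - 1 - K) <= 0).
  { replace (M * (M - 1 - K)) with ((1 - M) * (1 - M) - (eps * K * M + (1 - M)) - (1 - eps) * K * M) by ring. lra. }
  assert (h6 : M - 1 - K <= 0).
  { destruct (Rle_dec (M - 1 - K) 0) as [|h]; auto.
    apply Rnot_le_lt in h. assert (0 < M * (M - 1 - K)) by (apply Rmult_lt_0_compat; lra). lra. }
  unfold K in h6. lra.
Qed.
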